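(* Let $n\in\mathbb N$ and let $X\in\mathcal H$ be independent of $\mathcal F_n$. Suppose either (i) $X$ is bounded below, or (ii) $X\in L^1_b$. Then $\mathcal E_n(X)=\mathcal E(X)$ q.s.
   Context: Standing setting. $(\Omega,\mathcal F)$ is a measurable space with a discrete-time filtration $(\mathcal F_t)_{t\in\mathbb N}$, $\mathcal F_0$ trivial and $\mathcal F=\sigma(\bigcup_t\mathcal F_t)$. $\mathcal H$ is a linear space of $\mathcal F$-measurable real functions on $\Omega$ containing the constants, such that $X\in\mathcal H$ implies $|X|\in\mathcal H$ and $I_AX\in\mathcal H$ for all $A\in\mathcal F$; $\mathcal H_t:=\{X\in\mathcal H: X \text{ is } \mathcal F_t\text{-measurable}\}$. $(\mathcal E_t)$ is an $\mathcal{SL}$-expectation (a family of maps $\mathcal E_t:\mathcal H\to\mathcal H_t$ that are monotone, time-consistent $\mathcal E_s\circ\mathcal E_t=\mathcal E_s$ for $s\le t$, satisfy $\mathcal E_t(I_AY)=I_A\mathcal E_t(Y)$ for $A\in\mathcal F_t$, $\mathcal E_t(Y)=Y$ for $Y\in\mathcal H_t$, are subadditive, satisfy $\mathcal E_t(\lambda Y)=\lambda^+\mathcal E_t(Y)+\lambda^-\mathcal E_t(-Y)$ for $\lambda\in\mathcal H_t$, and $\mathcal E_0(X_i)\to0$ whenever $X_i\downarrow0$ pointwise); $\mathcal E:=\mathcal E_0$. ''q.s.'' means outside a set $N$ with $\mathcal E(I_N)=0$. Independence: a random variable $Y\in\mathcal H$ is independent of $Z=(Z_1,\dots,Z_k)$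 ($Z_i\in\mathcal H$) under $\mathcal E$ if for every measurable $\varphi$ on $\mathbb R^{k+1}$ with $\varphi(Z,Y)\in\mathcal H$ and $\varphi(z,Y)\in\mathcal H$ for all $z$, one has $\mathcal E[\varphi(Z,Y)]=\mathcal E[\bar\varphi(Z)]$ where $\bar\varphi(z):=\mathcal E[\varphi(z,Y)]$. $X$ is independent of $\mathcal F_n$ if $X$ is independent of $I_A$ for every $A\in\mathcal F_n$. $\|X\|_1:=\mathcal E(|X|)$; $L^1$ is the completion of $\{X\in\mathcal H:\|X\|_1<\infty\}$ modulo null elements; $L^1_b$ is the completion of the bounded elements of $\mathcal H$ under $\|\cdot\|_1$, equivalently $L^1_b=\{X\in L^1:\lim_{n\to\infty}\mathcal E(|X|I_{\{|X|>n\}})=0\}$. *)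

(* Defs.v *)
From Stdlib Require Import Reals Classical ClassicalEpsilon.
Open Scope R_scope.

Definition is_sigma_algebra {T : Type} (S : (T -> Prop) -> Prop) : Prop :=
  S (fun _ => True) /\
  (forall A, S A -> S (fun x => ~ A x)) /\
  (forall A : nat -> T -> Prop, (forall i, S (A i)) -> S (fun x => exists i, A i x)).

Definition generated {T : Type} (G : (T -> Prop) -> Prop) : (T -> Prop) -> Prop :=
  fun A => forall S, is_sigma_algebra S -> (forall B, G B -> S B) -> S A.

Definition Borel_R : (R -> Prop) -> Prop :=
  generated (fun B => exists a, forall x, B x <-> x <= a).

Definition Borel_R2 : (R * R -> Prop) -> Prop :=
  generated (fun B => (exists a, forall z y, B (z, y) <-> z <= a) \/
                      (exists b, forall z y, B (z, y) <-> y <= b)).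

Definition measurable {Omega : Type} (S : (Omega -> Prop) -> Prop) (X : Omega -> R) : Prop :=
  forall B, Borel_R B -> S (fun w => B (X w)).

Definition borel_measurable2 (phi : R -> R -> R) : Prop :=
  forall B, Borel_R B -> Borel_R2 (fun p => B (phi (fst p) (snd p))).

Definition indic {Omega : Type} (A : Omega -> Prop) : Omega -> R :=
  fun w => if excluded_middle_informative (A w) then 1 else 0.

Definition filtered_space {Omega : Type} (F : (Omega -> Prop) -> Prop)
    (Fs : nat -> (Omega -> Prop) -> Prop) : Prop :=
  is_sigma_algebra F /\
  (forall t, is_sigma_algebra (Fs t)) /\
  (forall s t A, (s <= t)%nat -> Fs s A -> Fs t A) /\
  (forall t A, Fs t A -> F A) /\
  (forall A, Fs 0%nat A -> (forall w, ~ A w) \/ (forall w, A w)) /\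
  (forall A, F A <-> generated (fun B => exists t, Fs t B) A).

Definition admissible_space {Omega : Type} (F : (Omega -> Prop) -> Prop)
    (H : (Omega -> R) -> Prop) : Prop :=
  (forall X, H X -> measurable F X) /\
  (forall c : R, H (fun _ => c)) /\
  (forall X Y, H X -> H Y -> H (fun w => X w + Y w)) /\
  (forall (a : R) X, H X -> H (fun w => a * X w)) /\
  (forall X, H X -> H (fun w => Rabs (X w))) /\
  (forall A X, F A -> H X -> H (fun w => indic A w * X w)).

Definition H_t {Omega : Type} (Fs : nat -> (Omega -> Prop) -> Prop)
    (H : (Omega -> R) -> Prop) (t : nat) (X : Omega -> R) : Prop :=
  H X /\ measurable (Fs t) X.

(** SL-expectation (E t = \mathcal E_t), acting on H; values outside H are irrelevant. *)
Definition SL_expectation {Omega : Type} (Fs : nat -> (Omega -> Prop) -> Prop)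
    (H : (Omega -> R) -> Prop) (E : nat -> (Omega -> R) -> (Omega -> R)) : Prop :=
  (forall t X, H X -> H_t Fs H t (E t X)) /\
  (forall t X Y, H X -> H Y -> (forall w, X w <= Y w) -> forall w, E t X w <= E t Y w) /\
  (forall s t X, (s <= t)%nat -> H X -> forall w, E s (E t X) w = E s X w) /\
  (forall t A Y, Fs t A -> H Y ->
     forall w, E t (fun w' => indic A w' * Y w') w = indic A w * E t Y w) /\
  (forall t Y, H_t Fs H t Y -> forall w, E t Y w = Y w) /\
  (forall t X Y, H X -> H Y ->
     forall w, E t (fun w' => X w' + Y w') w <= E t X w + E t Y w) /\
  (forall t lam Y, H_t Fs H t lam -> H Y ->
     forall w, E t (fun w' => lam w' * Y w') w =
               Rmax (lam w) 0 * E t Y w + Rmax (- lam w) 0 * E t (fun w' => - Y w') w) /\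
  (forall Xs : nat -> Omega -> R,
     (forall i, H (Xs i)) ->
     (forall i w, Xs (S i) w <= Xs i w) ->
     (forall w, Un_cv (fun i => Xs i w) 0) ->
     forall w, Un_cv (fun i => E 0%nat (Xs i) w) 0).

(** Y is independent of Z (a single random variable) under E = E_0.
    Since E_0 takes values in the F_0-measurable (constant) functions, the
    value E[phi(z,Y)] is read off at the same point w. *)
Definition indep {Omega : Type} (H : (Omega -> R) -> Prop)
    (E : nat -> (Omega -> R) -> (Omega -> R)) (Y Z : Omega -> R) : Prop :=
  forall phi : R -> R -> R,
    borel_measurable2 phi ->
    H (fun w => phi (Z w) (Y w)) ->
    (forall z, H (fun w => phi z (Y w))) ->
    forall w, E 0%nat (fun w' => phi (Z w') (Y w')) w =
              E 0%nat (fun w' => E 0%nat (fun w'' => phi (Z w') (Y w'')) w) w.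

Definition indep_of_Fn {Omega : Type} (Fs : nat -> (Omega -> Prop) -> Prop)
    (H : (Omega -> R) -> Prop) (E : nat -> (Omega -> R) -> (Omega -> R))
    (n : nat) (X : Omega -> R) : Prop :=
  forall A, Fs n A -> indep H E X (indic A).

(** For X in H: X in L^1_b, via lim_m E(|X| I_{|X|>m}) = 0 (X in H has finite norm). *)
Definition in_L1b {Omega : Type} (E : nat -> (Omega -> R) -> (Omega -> R))
    (X : Omega -> R) : Prop :=
  forall w, Un_cv (fun m : nat =>
     E 0%nat (fun w' => Rabs (X w') * indic (fun w'' => Rabs (X w'') > INR m) w') w) 0.

Definition qs_eq {Omega : Type} (F : (Omega -> Prop) -> Prop)
    (E : nat -> (Omega -> R) -> (Omega -> R)) (X Y : Omega -> R) : Prop :=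
  exists N : Omega -> Prop, F N /\ (forall w, E 0%nat (indic N) w = 0) /\
    (forall w, ~ N w -> X w = Y w).

(* Main.v *)
Require Import Defs.
From Stdlib Require Import Reals Classical ClassicalEpsilon Lra Lia FunctionalExtensionality PropExtensionality.
Open Scope R_scope.

Lemma Sext {T} (S : (T->Prop)->Prop) (A B : T -> Prop) :
  S A -> (forall x, A x <-> B x) -> S B.
Proof.
  intros HA HAB. replace B with A; auto.
  apply functional_extensionality; intro x; apply propositional_extensionality; auto.
Qed.

Section Sig.
Context {T : Type} (S : (T->Prop)->Prop) (HS : is_sigma_algebra S).

Lemma sig_full : S (fun _ => True).
Proof. destruct HS as [h _]; exact h. Qed.

Lemma sig_compl A : S A -> S (fun x => ~ A x).
Proof. destruct HS as [_ [h _]]; auto. Qed.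

Lemma sig_empty : S (fun _ => False).
Proof. apply Sext with (fun x => ~ True). apply sig_compl, sig_full. tauto. Qed.

Lemma sig_union (A : nat -> T -> Prop) : (forall i, S (A i)) -> S (fun x => exists i, A i x).
Proof. destruct HS as [_ [_ h]]; auto. Qed.

Lemma sig_union2 A B : S A -> S B -> S (fun x => A x \/ B x).
Proof.
  intros HA HB.
  apply Sext with (fun x => exists i, (fun i => match i with O => A | _ => B end) i x).
  - apply sig_union. intros [|i]; auto.
  - intro x; split.
    + intros [[|i] h]; auto.
    + intros [h|h]; [exists O | exists 1%nat]; auto.
Qed.

Lemma sig_inter A B : S A -> S B -> S (fun x => A x /\ B x).
Proof.
  intros HA HB.
  apply Sext with (fun x => ~ (~ A x \/ ~ B x)).
  - apply sig_compl, sig_union2; apply sig_compl; auto.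
  - intro x; destruct (classic (A x)), (classic (B x)); tauto.
Qed.
End Sig.

Lemma gen_sigma {T} (G : (T->Prop)->Prop) : is_sigma_algebra (generated G).
Proof.
  split; [|split].
  - intros S HS HG. destruct HS as [h _]; exact h.
  - intros A HA S HS HG. apply (sig_compl S HS). apply HA; auto.
  - intros A HA S HS HG. apply (sig_union S HS). intro i; apply HA; auto.
Qed.

Lemma gen_base {T} (G : (T->Prop)->Prop) B : G B -> generated G B.
Proof. intros h S HS HG; auto. Qed.

Lemma meas_gen {U} (S : (U->Prop)->Prop) (g : U -> R) :
  is_sigma_algebra S -> (forall a, S (fun u => g u <= a)) ->
  forall B, Borel_R B -> S (fun u => B (g u)).
Proof.
  intros HS Hg B HB.
  apply (HB (fun B => S (fun u => B (g u)))).
  - split; [|split].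
    + apply (sig_full S HS).
    + intros A HA. apply (sig_compl S HS (fun u => A (g u))); auto.
    + intros A HA. apply (sig_union S HS (fun i u => A i (g u))); auto.
  - intros B' [a Ha]. apply Sext with (fun u => g u <= a); auto.
    intro x; rewrite Ha; tauto.
Qed.

Lemma meas_const {U} (S : (U->Prop)->Prop) c : is_sigma_algebra S -> measurable S (fun _ => c).
Proof.
  intros HS. unfold measurable. apply meas_gen; auto. intro a.
  destruct (Rle_dec c a).
  - apply Sext with (fun _ => True). apply (sig_full S HS). tauto.
  - apply Sext with (fun _ => False). apply (sig_empty S HS). tauto.
Qed.

Lemma borel_gen a : Borel_R (fun x => x <= a).
Proof. apply gen_base. exists a. tauto. Qed.

Lemma indic_in {T} (A : T -> Prop) w : A w -> indic A w = 1.
Proof. unfold indic; destruct excluded_middle_informative; tauto. Qed.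
Lemma indic_out {T} (A : T -> Prop) w : ~ A w -> indic A w = 0.
Proof. unfold indic; destruct excluded_middle_informative; tauto. Qed.

Section Main.
Context (Omega : Type) (F : (Omega -> Prop) -> Prop)
  (Fs : nat -> (Omega -> Prop) -> Prop) (H : (Omega -> R) -> Prop)
  (E : nat -> (Omega -> R) -> (Omega -> R))
  (hF : filtered_space F Fs) (hH : admissible_space F H) (hE : SL_expectation Fs H E).

Lemma Hext (A B : Omega -> R) : H A -> (forall w, A w = B w) -> H B.
Proof. intros h e. replace B with A; auto. apply functional_extensionality; auto. Qed.

Lemma Hconst c : H (fun _ => c).
Proof. destruct hH as [_ [h _]]; auto. Qed.

Lemma Htconst t c : H_t Fs H t (fun _ => c).
Proof.
  split. apply Hconst. destruct hF as [_ [SFs _]]. apply meas_const; auto.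
Qed.

Lemma Hadd' A B : H A -> H B -> H (fun w => A w + B w).
Proof. destruct hH as [_ [_ [h _]]]; auto. Qed.

Lemma Hsc a A : H A -> H (fun w => a * A w).
Proof. destruct hH as [_ [_ [_ [h _]]]]; auto. Qed.

Lemma Hind' A Y : F A -> H Y -> H (fun w => indic A w * Y w).
Proof. destruct hH as [_ [_ [_ [_ [_ h]]]]]; auto. Qed.

Lemma Hindic A : F A -> H (indic A).
Proof.
  intro FA. apply Hext with (fun w => indic A w * 1).
  apply Hind'; auto; apply Hconst. intro; ring.
Qed.

Lemma E_const t c w : E t (fun _ => c) w = c.
Proof. destruct hE as [_ [_ [_ [_ [Id _]]]]]. apply Id, Htconst. Qed.

Lemma E_mono t A B : H A -> H B -> (forall w, A w <= B w) -> forall w, E t A w <= E t B w.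
Proof. destruct hE as [_ [h _]]; auto. Qed.

Lemma E_sub t A B : H A -> H B -> forall w, E t (fun w' => A w' + B w') w <= E t A w + E t B w.
Proof. destruct hE as [_ [_ [_ [_ [_ [h _]]]]]]; auto. Qed.

Lemma E_shift t Z k : H Z -> forall w, E t (fun w' => Z w' + k) w = E t Z w + k.
Proof.
  intros HZ w.
  pose proof (E_sub t Z (fun _ => k) HZ (Hconst k) w) as h1. cbv beta in h1.
  rewrite E_const in h1.
  assert (HZk : H (fun w' => Z w' + k)) by (apply Hadd'; auto; apply Hconst).
  pose proof (E_sub t (fun w' => Z w' + k) (fun _ => -k) HZk (Hconst (-k)) w) as h2.
  cbv beta in h2. rewrite E_const in h2.
  replace (fun w' => Z w' + k + - k) with Z in h2.
  lra. apply functional_extensionality; intro; ring.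
Qed.

Lemma E_hom_const t a A : 0 <= a -> H A -> forall w, E t (fun w' => a * A w') w = a * E t A w.
Proof.
  intros ha HA w. destruct hE as [_ [_ [_ [_ [_ [_ [Hom _]]]]]]].
  pose proof (Hom t (fun _ => a) A (Htconst t a) HA w) as h. cbv beta in h.
  rewrite h. rewrite Rmax_left by lra. rewrite Rmax_right by lra. ring.
Qed.

Lemma E_indic_ge0 t A : F A -> forall w, 0 <= E t (indic A) w.
Proof.
  intros FA w. rewrite <- (E_const t 0 w). apply E_mono; auto.
  apply Hconst. apply Hindic; auto.
  intro; unfold indic; destruct excluded_middle_informative; lra.
Qed.

Lemma E0_const Z : H Z -> forall w1 w2, E O Z w1 = E O Z w2.
Proof.
  intros HZ.
  assert (key : forall w1 w2, E O Z w2 <= E O Z w1).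
  { intros w1 w2. destruct hE as [Ht _]. destruct (Ht O Z HZ) as [_ M].
    destruct hF as [_ [_ [_ [_ [F0 _]]]]].
    pose proof (M _ (borel_gen (E O Z w1))) as h. cbv beta in h.
    destruct (F0 _ h) as [e|f].
    - exfalso; apply (e w1); lra.
    - apply f. }
  intros; apply Rle_antisym; auto.
Qed.

Lemma FsF t A : Fs t A -> F A.
Proof. intro HA. destruct hF as [_ [_ [_ [h _]]]]. exact (h t A HA). Qed.

Lemma SFs t : is_sigma_algebra (Fs t).
Proof. destruct hF as [_ [h _]]; auto. Qed.

Lemma SF : is_sigma_algebra F.
Proof. destruct hF as [h _]; auto. Qed.


Section Core.
Context (n : nat) (X : Omega -> R) (hX : H X) (hind : indep_of_Fn Fs H E n X)
  (c : R) (Hc0 : forall w, E O X w = c).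

Definition phi (k : R) (z y : R) : R := if Rle_dec z (1/2) then 0 else y + k.

Lemma phi_meas k : borel_measurable2 (phi k).
Proof.
  unfold borel_measurable2. intros B HB.
  apply (meas_gen Borel_R2 (fun p => phi k (fst p) (snd p))); auto.
  apply gen_sigma.
  intro a.
  assert (G1 : Borel_R2 (fun p => fst p <= 1/2)).
  { apply gen_base. left. exists (1/2). intros; simpl; tauto. }
  assert (G2 : Borel_R2 (fun p => snd p <= a - k)).
  { apply gen_base. right. exists (a - k). intros; simpl; tauto. }
  destruct (Rle_dec 0 a).
  - apply Sext with (fun p => fst p <= 1/2 \/ snd p <= a - k).
    apply sig_union2; auto. apply gen_sigma.
    intros [z y]; simpl; unfold phi; destruct (Rle_dec z (1/2)); split; intros; try lra;
    try (destruct H0; lra); tauto.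
  - apply Sext with (fun p => ~ fst p <= 1/2 /\ snd p <= a - k).
    apply sig_inter; auto. apply gen_sigma. apply sig_compl; auto. apply gen_sigma.
    intros [z y]; simpl; unfold phi; destruct (Rle_dec z (1/2)); split; intros; try lra;
    try (destruct H0; lra); try tauto; split; auto; lra.
Qed.

Lemma star A : Fs n A -> forall k, 0 <= c + k -> forall w,
  E O (fun w' => indic A w' * (E n X w' + k)) w = (c + k) * E O (indic A) w.
Proof.
  intros HA k hk w.
  assert (FA : F A) by (eapply FsF; eauto).
  assert (HXk : H (fun w' => X w' + k)) by (apply Hadd'; auto; apply Hconst).
  destruct hE as [_ [_ [TC [Mult _]]]].
  replace (fun w' => indic A w' * (E n X w' + k))
    with (E n (fun w' => indic A w' * (X w' + k))).
  2:{ apply functional_extensionality; intro w'. rewrite Mult; auto.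
      rewrite E_shift; auto. }
  rewrite TC; [| lia | apply Hind'; auto].
  replace (fun w' => indic A w' * (X w' + k)) with (fun w' => phi k (indic A w') (X w')).
  2:{ apply functional_extensionality; intro w'. unfold indic, phi.
      destruct excluded_middle_informative; destruct Rle_dec; lra. }
  rewrite (hind A HA (phi k) (phi_meas k)).
  2:{ apply Hext with (fun w' => indic A w' * (X w' + k)). apply Hind'; auto.
      intro w'; unfold indic, phi.
      destruct excluded_middle_informative; destruct Rle_dec; lra. }
  2:{ intro z; unfold phi; destruct Rle_dec. apply Hconst. auto. }
  replace (fun w' => E O (fun w'' => phi k (indic A w') (X w'')) w)
    with (fun w' => (c + k) * indic A w').
  2:{ apply functional_extensionality; intro w'. unfold indic, phi.
      destruct excluded_middle_informative; destruct Rle_dec; try lra.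
      - rewrite E_shift, Hc0; auto. ring.
      - rewrite E_const. ring. }
  apply E_hom_const; auto. apply Hindic; auto.
Qed.


Lemma HY : H (E n X).
Proof. destruct hE as [Ht _]. apply (Ht n X hX). Qed.

Lemma MY : measurable (Fs n) (E n X).
Proof. destruct hE as [Ht _]. apply (Ht n X hX). Qed.

Lemma Rabs_bnd : 0 <= c + Rabs c.
Proof. unfold Rabs; destruct Rcase_abs; lra. Qed.

Lemma P_null d : 0 < d -> forall w, E O (indic (fun w => ~ E n X w <= c + d)) w = 0.
Proof.
  intros hd w.
  set (P := fun w => ~ E n X w <= c + d).
  assert (HP : Fs n P).
  { apply sig_compl. apply SFs. apply (MY _ (borel_gen (c + d))). }
  assert (FP : F P) by (eapply FsF; eauto).
  pose proof Rabs_bnd as hk.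
  pose proof (star P HP (Rabs c) hk w) as h1.
  assert (h2 : E O (fun w' => (c + d + Rabs c) * indic P w') w <=
               E O (fun w' => indic P w' * (E n X w' + Rabs c)) w).
  { apply E_mono. apply Hsc, Hindic; auto.
    apply Hind'; auto. apply Hadd'. apply HY. apply Hconst.
    intro w'. unfold indic, P; destruct excluded_middle_informative as [hp|hp].
    - apply Rnot_le_lt in hp. lra.
    - lra. }
  rewrite E_hom_const in h2 by (try lra; apply Hindic; auto).
  pose proof (E_indic_ge0 O P FP w).
  fold P. nra.
Qed.

Lemma Q_null d : 0 < d -> forall w, E O (indic (fun w => E n X w <= c - d)) w = 0.
Proof.
  intros hd w.
  set (Q := fun w => E n X w <= c - d).
  assert (HQ : Fs n Q) by apply (MY _ (borel_gen (c - d))).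
  assert (FQ : F Q) by (eapply FsF; eauto).
  pose proof Rabs_bnd as hk.
  pose proof (star Q HQ (Rabs c + d) ltac:(lra) w) as h1.
  assert (h2 : E O (fun w' => indic Q w' * (E n X w' + (Rabs c + d))) w <=
               E O (fun w' => (c - d + (Rabs c + d)) * indic Q w') w).
  { apply E_mono.
    apply Hind'; auto. apply Hadd'. apply HY. apply Hconst.
    apply Hsc, Hindic; auto.
    intro w'. unfold indic, Q; destruct excluded_middle_informative as [hp|hp]; lra. }
  rewrite E_hom_const in h2 by (try lra; apply Hindic; auto).
  pose proof (E_indic_ge0 O Q FQ w).
  fold Q. nra.
Qed.

Definition dl (m : nat) : R := / INR (S m).

Lemma dl_pos m : 0 < dl m.
Proof. unfold dl. apply Rinv_0_lt_compat, lt_0_INR; lia. Qed.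

Lemma dl_dec m : dl (S m) < dl m.
Proof.
  unfold dl. apply Rinv_lt_contravar.
  apply Rmult_lt_0_compat; apply lt_0_INR; lia.
  apply lt_INR; lia.
Qed.

Definition Aset (m : nat) : Omega -> Prop :=
  fun w => E n X w <= c - dl m \/ ~ E n X w <= c + dl m.

Lemma A_Fs m : Fs n (Aset m).
Proof.
  unfold Aset. apply sig_union2. apply SFs. apply (MY _ (borel_gen _)).
  apply sig_compl. apply SFs. apply (MY _ (borel_gen _)).
Qed.

Lemma A_null m w : E O (indic (Aset m)) w = 0.
Proof.
  assert (FA : F (Aset m)) by (eapply FsF; apply A_Fs).
  set (Q := fun w => E n X w <= c - dl m).
  set (P := fun w => ~ E n X w <= c + dl m).
  assert (FQ : F Q) by (eapply FsF; apply (MY _ (borel_gen _))).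
  assert (FP : F P) by (apply (FsF n); apply sig_compl; [apply SFs | apply (MY _ (borel_gen _))]).
  pose proof (E_indic_ge0 O _ FA w).
  assert (E O (indic (Aset m)) w <= E O (fun w' => indic Q w' + indic P w') w).
  { apply E_mono. apply Hindic; auto. apply Hadd'; apply Hindic; auto.
    intro w'. unfold indic, Aset, Q, P.
    repeat destruct excluded_middle_informative; tauto || lra. }
  pose proof (E_sub O (indic Q) (indic P) (Hindic _ FQ) (Hindic _ FP) w).
  assert (hq : E O (indic Q) w = 0) by exact (Q_null (dl m) (dl_pos m) w).
  assert (hp : E O (indic P) w = 0) by exact (P_null (dl m) (dl_pos m) w).
  lra.
Qed.

Lemma A_mono m w : Aset m w -> Aset (S m) w.
Proof.
  pose proof (dl_dec m). pose proof (dl_pos (S m)).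
  unfold Aset. intros [h|h]; [left; lra | right; intro; apply h; lra].
Qed.

Lemma A_mono2 m m' w : (m <= m')%nat -> Aset m w -> Aset m' w.
Proof. induction 1; auto. intro; apply A_mono; auto. Qed.

Definition Nset : Omega -> Prop := fun w => exists m, Aset m w.
Definition Bset (m : nat) : Omega -> Prop := fun w => Nset w /\ ~ Aset m w.

Lemma N_F : F Nset.
Proof. unfold Nset. apply sig_union. apply SF. intro m. eapply FsF; apply A_Fs. Qed.

Lemma B_F m : F (Bset m).
Proof.
  unfold Bset. apply sig_inter. apply SF. apply N_F. apply sig_compl. apply SF. eapply FsF; apply A_Fs.
Qed.

Lemma N_null w : E O (indic Nset) w = 0.
Proof.
  destruct hE as [_ [_ [_ [_ [_ [_ [_ Cont]]]]]]].
  assert (hc : Un_cv (fun i => E O (indic (Bset i)) w) 0).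
  { apply Cont.
    - intro; apply Hindic, B_F.
    - intros i w'. unfold indic.
      repeat destruct excluded_middle_informative; try lra.
      exfalso. destruct b as [hN hA]. apply n0. split; auto.
      intro; apply hA, A_mono; auto.
    - intros w' eps heps. destruct (classic (Nset w')) as [[m0 Hm0]|hN].
      + exists m0. intros m hm. rewrite indic_out.
        unfold R_dist. replace (0 - 0) with 0 by ring. rewrite Rabs_R0; auto.
        intros [_ h]. apply h. apply A_mono2 with m0; auto.
      + exists O. intros m hm. rewrite indic_out.
        unfold R_dist. replace (0 - 0) with 0 by ring. rewrite Rabs_R0; auto.
        intros [h _]; auto. }
  assert (bnd : forall m, E O (indic Nset) w <= E O (indic (Bset m)) w).
  { intro m.
    assert (E O (indic Nset) w <= E O (fun w' => indic (Aset m) w' + indic (Bset m) w') w).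
    { apply E_mono. apply Hindic, N_F. apply Hadd'; apply Hindic. eapply FsF; apply A_Fs.
      apply B_F.
      intro w'. unfold indic, Bset.
      repeat destruct excluded_middle_informative; try lra. exfalso; tauto. }
    pose proof (E_sub O _ _ (Hindic _ (FsF _ _ (A_Fs m))) (Hindic _ (B_F m)) w).
    rewrite A_null in H1. lra. }
  pose proof (E_indic_ge0 O _ N_F w).
  destruct (Rle_lt_dec (E O (indic Nset) w) 0) as [h|h]; [lra|].
  destruct (hc _ h) as [m hm]. specialize (hm m (Nat.le_refl m)).
  specialize (bnd m). unfold R_dist in hm.
  rewrite Rminus_0_r in hm. apply Rabs_def2 in hm. lra.
Qed.

Lemma outside_N w : ~ Nset w -> E n X w = c.
Proof.
  intro hN. destruct (Req_dec (E n X w) c) as [e|ne]; auto. exfalso; apply hN.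
  assert (hpos : 0 < Rabs (E n X w - c)) by (apply Rabs_pos_lt; lra).
  destruct (archimed_cor1 _ hpos) as [N [hN1 hN2]].
  exists (pred N). unfold Aset, dl. replace (S (pred N)) with N by lia.
  revert hN1. unfold Rabs; destruct Rcase_abs; intro; [left | right]; lra.
Qed.

End Core.
End Main.

Theorem lemma4p3 (Omega : Type) (F : (Omega -> Prop) -> Prop)
  (Fs : nat -> (Omega -> Prop) -> Prop) (H : (Omega -> R) -> Prop)
  (E : nat -> (Omega -> R) -> (Omega -> R))
  (hF : filtered_space F Fs) (hH : admissible_space F H) (hE : SL_expectation Fs H E)
  (n : nat) (X : Omega -> R) (hX : H X) (hind : indep_of_Fn Fs H E n X)
  (hcase : (exists c : R, forall w, c <= X w) \/ in_L1b E X) :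
  qs_eq F E (E n X) (E 0%nat X).
Proof.
  destruct (classic (inhabited Omega)) as [[w0]|hne].
  - set (c := E O X w0).
    assert (Hc0 : forall w, E O X w = c).
    { intro w. apply (E0_const Omega F Fs H E hF hE X hX). }
    exists (Nset Omega E n X c). split; [|split].
    + apply (N_F Omega F Fs H E hF hE n X hX c).
    + intro w. apply (N_null Omega F Fs H E hF hH hE n X hX hind c Hc0).
    + intros w hw. rewrite Hc0. apply (outside_N Omega E n X c w hw).
  - exists (fun _ => True). split; [|split].
    + apply (SF Omega F Fs hF).
    + intro w. exfalso; apply hne; constructor; exact w.
    + intros w. exfalso; apply hne; constructor; exact w.
Qed.
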